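(* Consider the subclass of SCMs in $\mathcal{M}$ that have a set of endogenous variables $Z$ such that $Y\perp\!\!\!\perp\{D,\Theta\}\mid X,Z$ and for which $\mathbb{P}(X,Z\mid\mathrm{do}(D=d,\Theta=\theta))\ll\mathbb{P}(X,Z\mid\mathrm{do}(D=d',\Theta=\theta'))$ for all $d,d',\theta,\theta'$. In this subclass: (T1) The deployment effect $\tau(\theta)$ is identifiable from $\{\mathbb{P}(X,Y,Z\mid\mathrm{do}(D=0)),\ \mathbb{P}(X,Z\mid\mathrm{do}(D=1,\Theta=\theta))\}$ via $$\tau(\theta)=\mathbb{E}\big[\mathbb{E}[Y\mid X,Z,\mathrm{do}(D=0)]\,\big|\,\mathrm{do}(D=1,\Theta=\theta)\big]-\mathbb{E}[Y\mid\mathrm{do}(D=0)],$$ and from $\{\mathbb{P}(X,Y,Z\mid\mathrm{do}(D=1,\Theta=\theta)),\ \mathbb{P}(X,Z\mid\mathrm{do}(D=0))\}$ via $$\tau(\theta)=\mathbb{E}[Y\mid\mathrm{do}(D=1,\Theta=\theta)]-\mathbb{E}\big[\mathbb{E}[Y\mid X,Z,\mathrm{do}(D=1,\Theta=\theta)]\,\big|\,\mathrm{do}(D=0)\big].$$ (T2) The retraining effect $\rho(\theta_{t+1},\theta_t)$ is identifiable from $\{\mathbb{P}(X,Y,Z\mid\mathrm{do}(D=1,\Theta=\theta_t)),\ \mathbb{P}(X,Z\mid\mathrm{do}(D=1,\Theta=\theta_{t+1}))\}$ via $$\rho(\theta_{t+1},\theta_t)=\mathbb{E}\big[\mathbb{E}[Y\mid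 X,Z,\mathrm{do}(D=1,\Theta=\theta_t)]\,\big|\,\mathrm{do}(D=1,\Theta=\theta_{t+1})\big]-\mathbb{E}[Y\mid\mathrm{do}(D=1,\Theta=\theta_t)].$$ (T3) The baseline predictor $\mathbb{E}[Y\mid X,\mathrm{do}(D=0)]$ is identifiable from $\{\mathbb{P}(X,Y,Z\mid\mathrm{do}(D=1,\Theta=\theta)),\ \mathbb{P}(X,Z\mid\mathrm{do}(D=0))\}$ via $$\mathbb{E}[Y\mid X,\mathrm{do}(D=0)]=\mathbb{E}\big[\mathbb{E}[Y\mid X,Z,\mathrm{do}(D=1,\Theta=\theta)]\,\big|\,X,\mathrm{do}(D=0)\big].$$
   Context: Setting: all variables take values in subsets of Euclidean spaces with Borel $\sigma$-algebras. Variables: features $X$ (possibly multidimensional), target $Y$ (real-valued), prediction $\hat{Y}$, and two input (non-random, externally set) variables: a domain indicator $D\in\{0,1\}$ ($D=0$: the decision support system is not deployed; $D=1$: it is deployed) and parameters $\Theta$. A structural causal model (SCM) with input variables $\{D,\Theta\}$ induces, for every value $(d,\theta)$, a distribution $\mathbb{P}(\cdot\mid\mathrm{do}(D=d,\Theta=\theta))$ on the endogenous variables, the push-forward of the independent exogenous distributions through the structural equations; $\mathbb{P}(\cdot\mid\mathrm{do}(D=0))$ denotes this distribution with $D=0$. The class $\mathcal{M}$: the set of SCMs with endogenous variables $V\supseteq\{X,\hat{Y},Y\}$, input variables $\{D,\Theta\}$, and graph $G$ such that the parents of $\hat{Y}$ are exactly $\{X,\Theta\}$, the children of $D$ equal the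 children of $\hat{Y}$, and the latent projection of $G$ onto $\{X,\hat{Y},Y,D,\Theta\}$ is a subgraph of the acyclic directed mixed graph with edges $X\to\hat{Y}$, $\Theta\to\hat{Y}$, $X\to Y$, $\hat{Y}\to Y$, $D\to Y$, $X\leftrightarrow Y$. Identifiability: a target quantity $t(M)$ is identifiable in a class from a set $s(M)$ of distributions induced by $M$ if $s(M_1)=s(M_2)\implies t(M_1)=t(M_2)$ for all $M_1,M_2$ in the class. Deployment effect: $\tau(\theta):=\mathbb{E}[Y\mid\mathrm{do}(D=1,\Theta=\theta)]-\mathbb{E}[Y\mid\mathrm{do}(D=0)]$. Retraining effect: $\rho(\theta_{t+1},\theta_t):=\mathbb{E}[Y\mid\mathrm{do}(D=1,\Theta=\theta_{t+1})]-\mathbb{E}[Y\mid\mathrm{do}(D=1,\Theta=\theta_t)]$. Baseline predictor: $\mathbb{E}[Y\mid X,\mathrm{do}(D=0)]$. The conditional independence $Y\perp\!\!\!\perp\{D,\Theta\}\mid X,Z$ between a random variable and input variables is meant in the transitional sense (e.g. implied by d-separation in the graph). $\ll$ denotes absolute continuity. *)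

(* Defs.v *)
From HB Require Import structures.
From mathcomp Require Import all_boot all_order all_algebra.
From mathcomp Require Import all_classical all_reals all_analysis.

Unset Printing Implicit Defensive.

Import Order.TTheory GRing.Theory Num.Theory.
Local Open Scope classical_set_scope.
Local Open Scope ring_scope.

(* Structural causal models with input variables D (domain indicator, a      *)
(* boolean: false = 0 = not deployed, true = 1 = deployed) and Theta.        *)
(* Every variable (endogenous, exogenous, and the input Theta) takes values  *)
(* in the Euclidean space R^m = m.-tuple R with its Borel (product)          *)
(* sigma-algebra; a variable with values in a subset of R^n (n <= m) is      *)
(* represented via the embedding of R^n into R^m.             *)

Section SCM_def.
Context (R : realType) (m : nat).

Definition Val := (m.-tuple R)%type.

Definition node (V U : finType) := ((V + U) + bool)%type.
Definition nEndo {V U : finType} (v : V) : node V U := inl (inl v).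
Definition nExo {V U : finType} (u : U) : node V U := inl (inr u).
Definition nD {V U : finType} : node V U := inr false.
Definition nTh {V U : finType} : node V U := inr true.

Record SCM := {
  Vn : finType;
  Un : finType;
  vX : Vn; vYh : Vn; vY : Vn;
  vX_Yh : vX != vYh; vX_Y : vX != vY; vYh_Y : vYh != vY;
  pa : node Vn Un -> Vn -> bool;
  acyclic : forall (v : Vn) (s : seq Vn), ~~ path (fun a b => pa (nEndo a) b) v (rcons s v);
  f : Vn -> (Vn -> Val) -> (Un -> Val) -> bool -> Val -> Val;
  f_local : forall v x x' u u' d d' th th',
      (forall w, pa (nEndo w) v -> x w = x' w) ->
      (forall w, pa (nExo w) v -> u w = u' w) ->
      (pa nD v -> d = d') -> (pa nTh v -> th = th') ->
      f v x u d th = f v x' u' d' th';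
  dOm : measure_display;
  Om : measurableType dOm;
  Pr : probability Om R;
  Uex : Un -> Om -> Val;
  Uex_meas : forall u, measurable_fun setT (Uex u);
  Uex_indep : forall A : Un -> set Val, (forall u, measurable (A u)) ->
      Pr (\bigcap_u (Uex u @^-1` A u)) = (\prod_(u : Un) Pr (Uex u @^-1` A u))%E;
  (* the (unique, by acyclicity) solution of the structural equations for    *)
  (* the intervention do(D = d, Theta = th)                                  *)
  sol : bool -> Val -> Om -> Vn -> Val;
  sol_eq : forall d th w v, sol d th w v = f v (sol d th w) (fun u => Uex u w) d th;
  sol_meas : forall d th v, measurable_fun setT (fun w => sol d th w v);
  (* Y is real-valued: it lives on the first coordinate axis of R^m *)
  Y_real : forall d th w, all (eq_op 0) (behead (sol d th w vY))
}.


Definition gedge (M : SCM) : rel (node (Vn M) (Un M)) :=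
  fun a b => match b with inl (inl v) => pa M a v | _ => false end.

Definition Obs (M : SCM) : pred (node (Vn M) (Un M)) :=
  fun a => [|| a == nEndo (vX M), a == nEndo (vYh M), a == nEndo (vY M),
              a == nD | a == nTh].

Definition lat (M : SCM) : pred (node (Vn M) (Un M)) := fun a => ~~ Obs M a.

(* latent projection of the graph onto {X, Yhat, Y, D, Theta} *)
Definition proj_dir (M : SCM) (a b : node (Vn M) (Un M)) : Prop :=
  Obs M a /\ Obs M b /\
  exists s, path (gedge M) a (rcons s b) && all (lat M) s.

Definition proj_bi (M : SCM) (a b : node (Vn M) (Un M)) : Prop :=
  Obs M a /\ Obs M b /\ a <> b /\
  exists c s1 s2, [&& lat M c, path (gedge M) c (rcons s1 a), all (lat M) s1,
                      path (gedge M) c (rcons s2 b) & all (lat M) s2].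

Definition inM (M : SCM) : Prop :=
  let X := nEndo (vX M) in let Yh := nEndo (vYh M) in let Y := nEndo (vY M) in
  (forall a, pa M a (vYh M) <-> a = X \/ a = nTh) /\
  (forall v, pa M nD v = pa M Yh v) /\
  (forall a b, proj_dir M a b ->
     (a, b) = (X, Yh) \/ (a, b) = (nTh, Yh) \/ (a, b) = (X, Y) \/
     (a, b) = (Yh, Y) \/ (a, b) = (nD, Y)) /\
  (forall a b, proj_bi M a b -> (a, b) = (X, Y) \/ (a, b) = (Y, X)).

Section observed.
Context (k : nat).

Definition Xv (M : SCM) d th (w : Om M) : Val := sol M d th w (vX M).
Definition Yv (M : SCM) d th (w : Om M) : R := head 0 (tval (sol M d th w (vY M))).
(* Z: an ordered family of k endogenous variables *)
Definition Zv (M : SCM) (zn : 'I_k -> Vn M) d th (w : Om M) : k.-tuple Val :=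
  [tuple sol M d th w (zn i) | i < k].
Definition XZv (M : SCM) zn d th (w : Om M) : Val * k.-tuple Val :=
  (Xv M d th w, Zv M zn d th w).
Definition XZYv (M : SCM) zn d th (w : Om M) : (Val * k.-tuple Val) * R :=
  (XZv M zn d th w, Yv M d th w).

End observed.

Definition law (M : SCM) {dT} {T : measurableType dT} (F : Om M -> T) :
  set T -> \bar R := fun A => Pr M (F @^-1` A).

Definition same_law {dT} {T : measurableType dT} (M1 M2 : SCM)
  (F1 : Om M1 -> T) (F2 : Om M2 -> T) : Prop :=
  forall A, measurable A -> law M1 F1 A = law M2 F2 A.

Definition EY (M : SCM) d th : \bar R := (\int[Pr M]_w (Yv M d th w)%:E)%E.

(* deployment effect (do(D = 0) realised with Theta = th0) and retraining effect *)
Definition tau (M : SCM) th th0 : \bar R := (EY M true th - EY M false th0)%E.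
Definition rho (M : SCM) th1 th0 : \bar R := (EY M true th1 - EY M true th0)%E.

(* g is a version of the conditional expectation E[Y | W] (Doob-Dynkin form) *)
Definition is_cexp {dO} {O : measurableType dO} {dT} {T : measurableType dT}
  (P : probability O R) (Y : O -> R) (W : O -> T) (g : T -> R) : Prop :=
  measurable_fun setT g /\
  P.-integrable setT (fun w => (g (W w))%:E) /\
  forall A, measurable A ->
    (\int[P]_(w in W @^-1` A) (Y w)%:E = \int[P]_(w in W @^-1` A) (g (W w))%:E)%E.

(* transitional conditional independence  Y _||_ {D, Theta} | X, Z  *)
Definition TCI (k : nat) (M : SCM) (zn : 'I_k -> Vn M) : Prop :=
  exists K : R.-pker (Val * k.-tuple Val) ~> R,
  forall d th A B, measurable A -> measurable B ->
    Pr M (XZv k M zn d th @^-1` A `&` Yv M d th @^-1` B) =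
    (\int[Pr M]_(w in XZv k M zn d th @^-1` A) K (XZv k M zn d th w) B)%E.

Definition AC (k : nat) (M : SCM) (zn : 'I_k -> Vn M) : Prop :=
  forall d d' th th', law M (XZv k M zn d th) `<< law M (XZv k M zn d' th').

Definition Y_integrable (M : SCM) : Prop :=
  forall d th, (Pr M).-integrable setT (fun w => (Yv M d th w)%:E).

Definition inSub (k : nat) (M : SCM) (zn : 'I_k -> Vn M) : Prop :=
  [/\ inM M, TCI k M zn, AC k M zn & Y_integrable M].

End SCM_def.

Arguments SCM R m : clear implicits.
Arguments Vn {R m}. Arguments Un {R m}. Arguments vX {R m}. Arguments vYh {R m}.
Arguments vY {R m}. Arguments pa {R m}. Arguments f {R m}. Arguments dOm {R m}.
Arguments Om {R m}. Arguments Pr {R m}. Arguments Uex {R m}. Arguments sol {R m}.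
Arguments gedge {R m}. Arguments Obs {R m}. Arguments lat {R m}.
Arguments proj_dir {R m}. Arguments proj_bi {R m}. Arguments inM {R m}.
Arguments Xv {R m}. Arguments Yv {R m}. Arguments Zv {R m k}. Arguments XZv {R m k}.
Arguments XZYv {R m k}. Arguments law {R m}. Arguments same_law {R m dT T}.
Arguments EY {R m}. Arguments tau {R m}. Arguments rho {R m}.
Arguments is_cexp {R dO O dT T}. Arguments TCI {R m k}. Arguments AC {R m k}.
Arguments Y_integrable {R m}. Arguments inSub {R m k}.

(* Main.v *)
Require Import Defs.
From HB Require Import structures.
From mathcomp Require Import all_boot all_order all_algebra.
From mathcomp Require Import all_classical all_reals all_analysis.
From mathcomp Require measurable_realfun.
Import Order.TTheory GRing.Theory Num.Theory.
Local Open Scope classical_set_scope.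
Local Open Scope ring_scope.

Module Aux.
Import HBNNSimple measurable_realfun.

Definition pfm (R : realType) d dT (O : measurableType d) (T : measurableType dT)
  (P : measure O R) (W : O -> T) (mW : measurable_fun setT W) : measure T R :=
  @measure_function_pushforward__canonical__measure_function_Measure _ _ _ _ _ P W mW.

Arguments pfm {R d dT O T} P {W} mW.

Lemma pfmE (R : realType) d dT (O : measurableType d) (T : measurableType dT)
  (P : measure O R) (W : O -> T) (mW : measurable_fun setT W) A :
  pfm P mW A = P (W @^-1` A).
Proof. by []. Qed.

Section Transfer.
Context (R : realType) d (O : measurableType d) (P : measure O R)
  dT (T : measurableType dT).
Local Open Scope ereal_scope.

Lemma ae_transfer (W W' : O -> T) (mW : measurable_fun setT W)
  (mW' : measurable_fun setT W') (f g : T -> \bar R) :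
  (forall N, measurable N -> P (W @^-1` N) = 0 -> P (W' @^-1` N) = 0) ->
  ae_eq (pfm P mW) setT f g -> ae_eq (pfm P mW') setT f g.
Proof.
move=> H [N [mN N0 sub]]; exists N; split => //.
exact: (H N mN N0).
Qed.

Lemma ae_pull (W : O -> T) (mW : measurable_fun setT W) (f g : T -> R) :
  ae_eq (pfm P mW) setT (EFin \o f) (EFin \o g) ->
  {ae P, forall w, f (W w) = g (W w)}.
Proof.
move=> [N [mN N0 sub]]; exists (W @^-1` N); split.
- by move: (mW measurableT _ mN); rewrite setTI.
- by rewrite -pfmE.
- move=> w /= nfg; apply: sub => /= H; apply: nfg.
  by have /= [] := H I.
Qed.

Lemma integrable_aeq (mu : measure T R) (f g : T -> \bar R) :
  mu.-integrable setT f -> measurable_fun setT g -> ae_eq mu setT f g ->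
  mu.-integrable setT g.
Proof.
move=> fi mg fg; apply/integrableP; split => //.
have mf : measurable_fun setT f by case/integrableP: fi.
have -> : \int[mu]_(x in setT) `|g x| = \int[mu]_(x in setT) `|f x|.
  apply: (ae_eq_integral (fun x => `|f x|) (fun x => `|g x|)) => //.
  - exact: measurableT_comp.
  - exact: measurableT_comp.
  - apply: ae_eq_sym; exact: (ae_eq_abse fg).
by case/integrableP: fi.
Qed.

Lemma integrable_pull (W : O -> T) (mW : measurable_fun setT W) (f : T -> \bar R) :
  (pfm P mW).-integrable setT f -> P.-integrable setT (f \o W).
Proof.
move=> /integrableP[mf fi]; apply/integrableP; split.
  exact: measurableT_comp.
move: fi; rewrite (ge0_integral_pushforward mW) ?preimage_setT//.
by apply: measurableT_comp.
Qed.

Lemma integrable_push (W : O -> T) (mW : measurable_fun setT W) (f : T -> \bar R) :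
  measurable_fun setT f -> P.-integrable setT (f \o W) -> (pfm P mW).-integrable setT f.
Proof.
move=> mf fi; apply: integrable_pushforward => //.
Qed.

End Transfer.
Arguments integrable_pull {R d O P dT T W mW f}.
Arguments integrable_push {R d O P dT T W} mW {f}.
Arguments ae_transfer {R d O P dT T W W' mW mW' f g}.
Arguments ae_pull {R d O P dT T W mW f g}.
Arguments integrable_aeq {R dT T mu f g}.

Section Gen.
Context (R : realType) d (O : measurableType d) (P : probability O R)
  dT (T : measurableType dT) (W : O -> T) (Y : O -> R)
  (mW : measurable_fun setT W) (mY : measurable_fun setT Y)
  (K : R.-pker T ~> R)
  (HK : forall A B, measurable A -> measurable B ->
     P (W @^-1` A `&` Y @^-1` B) = (\int[P]_(w in W @^-1` A) K (W w) B)%E).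

Local Open Scope ereal_scope.

Let mpre (A : set T) : measurable A -> measurable (W @^-1` A).
Proof. by move=> mA; rewrite -[X in measurable X]setTI; exact: mW. Qed.

Let mpreY (B : set R) : measurable B -> measurable (Y @^-1` B).
Proof. by move=> mB; rewrite -[X in measurable X]setTI; exact: mY. Qed.

Let disint_indic A B (mA : measurable A) (mB : measurable B) :
  \int[P]_(w in W @^-1` A) (\1_B (Y w))%:E =
  \int[P]_(w in W @^-1` A) \int[K (W w)]_y (\1_B y)%:E.
Proof.
have mWA := @mpre _ mA; have mYB := @mpreY _ mB.
rewrite (_ : (fun w => _) = (fun w => (\1_(Y @^-1` B) w)%:E)); last first.
  by apply/funext => w; rewrite /indic /= /preimage.
rewrite integral_indic//.
under eq_integral do rewrite integral_indic// setIT.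
by rewrite setIC; apply: HK.
Qed.

Let disint_nnsfun A (mA : measurable A) (f : {nnsfun R >-> R}) :
  \int[P]_(w in W @^-1` A) (f (Y w))%:E =
  \int[P]_(w in W @^-1` A) \int[K (W w)]_y (f y)%:E.
Proof.
have mWA := @mpre _ mA.
under [in LHS]eq_integral do rewrite fimfunE -fsumEFin//.
rewrite ge0_integral_fsum//; last 2 first.
  - move=> r; apply/measurable_EFinP/measurable_funM => //.
    apply: measurableT_comp => //; last exact: measurable_funTS.
  - by move=> r w _; rewrite EFinM nnfun_muleindic_ge0.
under [in RHS]eq_integral.
  move=> w _.
  under eq_integral.
    by move=> z _; rewrite fimfunE -fsumEFin//; over.
  rewrite /= ge0_integral_fsum//; last 2 first.
    - by move=> r; exact/measurable_EFinP/measurableT_comp.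
    - by move=> r z _; rewrite EFinM nnfun_muleindic_ge0.
  under eq_fsbigr.
    move=> r _.
    rewrite (integralZl_indic _ (fun r => f @^-1` [set r]))//; last first.
      by move=> r0; rewrite preimage_nnfun0.
    rewrite integral_indic// setIT.
    over.
  over.
rewrite /= ge0_integral_fsum//; last 2 first.
  - move=> r; apply: measurable_funeM.
    apply: measurable_funTS.
    exact: (measurableT_comp (measurable_kernel K _ (measurable_sfunP f (measurable_set1 r))) mW).
  - move=> n y _.
    have := mulemu_ge0 (fun n => f @^-1` [set n]).
    by apply; exact: preimage_nnfun0.
apply: eq_fsbigr => r _.
rewrite (_ : (fun w => _) = (fun w => (r * \1_(Y @^-1` (f @^-1` [set r])) w)%:E)); last first.
  by apply/funext => w; rewrite /indic /= /preimage.
rewrite (integralZl_indic _ (fun r => Y @^-1` (f @^-1` [set r])))//; last 2 first.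
  by move=> r0; rewrite preimage_nnfun0// preimage_set0.
  exact: mpreY.
have [r0|r0] := leP 0%R r.
  rewrite ge0_integralZl//.
  - rewrite integral_indic//; last exact: mpreY.
    by rewrite setIC; congr (_ * _); apply: HK.
  - apply: measurable_funTS.
    exact: (measurableT_comp (measurable_kernel K _ (measurable_sfunP f (measurable_set1 r))) mW).
rewrite integral0_eq ?mule0.
  by rewrite integral0_eq// => y _; rewrite preimage_nnfun0// measure0 mule0.
by move=> y _; rewrite preimage_nnfun0// preimage_set0 indic0.
Qed.

Lemma disint A (mA : measurable A) (h : R -> \bar R)
  (h0 : forall y, 0 <= h y) (mh : measurable_fun setT h) :
  \int[P]_(w in W @^-1` A) h (Y w) =
  \int[P]_(w in W @^-1` A) \int[K (W w)]_y h y.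
Proof.
have mWA := @mpre _ mA.
pose f_ := nnsfun_approx measurableT mh.
transitivity (\int[P]_(w in W @^-1` A) (lim ((f_ n (Y w))%:E @[n --> \oo]))).
  apply/eq_integral => w _; apply/esym/cvg_lim => //=.
  exact: cvg_nnsfun_approx.
rewrite monotone_convergence//; last 3 first.
  - move=> n; apply/measurable_EFinP; apply: measurable_funTS.
    exact: measurableT_comp.
  - by move=> n z _; rewrite lee_fin.
  - by move=> z _ a b ab; rewrite lee_fin; exact/lefP/nd_nnsfun_approx.
rewrite (_ : (fun _ => _) =
    (fun n => \int[P]_(w in W @^-1` A) (\int[K (W w)]_z (f_ n z)%:E)))//; last first.
  by apply/funext => n; rewrite disint_nnsfun.
transitivity (\int[P]_(w in W @^-1` A) lim ((\int[K (W w)]_z (f_ n z)%:E) @[n --> \oo])).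
  rewrite -monotone_convergence//; last 3 first.
  - move=> n; apply: measurable_funTS.
    apply: (measurableT_comp (f := fun t => \int[K t]_z (f_ n z)%:E)) => //.
    apply: measurable_fun_integral_kernel => //.
    + by move=> U mU; exact: measurable_kernel.
    + by move=> z; rewrite lee_fin.
    + exact/measurable_EFinP.
  - by move=> n y _; apply: integral_ge0 => // z _; rewrite lee_fin.
  - move=> y _ a b ab; apply: ge0_le_integral => //.
    + by move=> z _; rewrite lee_fin.
    + exact/measurable_EFinP.
    + exact/measurable_EFinP.
    + by move=> z _; rewrite lee_fin; exact/lefP/nd_nnsfun_approx.
apply: eq_integral => y _; rewrite -monotone_convergence//; last 3 first.
  - by move=> n; exact/measurable_EFinP.
  - by move=> n z _; rewrite lee_fin.
  - by move=> z _ a b ab; rewrite lee_fin; exact/lefP/nd_nnsfun_approx.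
by apply: eq_integral => z _; apply/cvg_lim => //; exact: cvg_nnsfun_approx.
Qed.

Definition hp (y : R) : \bar R := maxe y%:E 0.
Definition hn (y : R) : \bar R := maxe (- y%:E) 0.

Lemma hp_ge0 y : 0 <= hp y. Proof. by rewrite /hp le_max lexx orbT. Qed.
Lemma hn_ge0 y : 0 <= hn y. Proof. by rewrite /hn le_max lexx orbT. Qed.

Lemma mhp : measurable_fun setT hp.
Proof.
rewrite (_ : hp = (fun y => (y%:E))^\+); last by apply/funext => y; rewrite funeposE.
by apply: measurable_funepos; apply/measurable_EFinP; exact: measurable_id.
Qed.
Lemma mhn : measurable_fun setT hn.
Proof.
rewrite (_ : hn = (fun y => (y%:E))^\-); last by apply/funext => y; rewrite funenegE.
by apply: measurable_funeneg; apply/measurable_EFinP; exact: measurable_id.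
Qed.

Definition kp t := \int[K t]_y hp y.
Definition kn t := \int[K t]_y hn y.

Lemma kp_ge0 t : 0 <= kp t.
Proof. by apply: integral_ge0 => y _; exact: hp_ge0. Qed.
Lemma kn_ge0 t : 0 <= kn t.
Proof. by apply: integral_ge0 => y _; exact: hn_ge0. Qed.

Lemma mkp : measurable_fun setT kp.
Proof.
apply: measurable_fun_integral_kernel; last exact: mhp.
- by move=> U mU; exact: measurable_kernel.
- exact: hp_ge0.
Qed.
Lemma mkn : measurable_fun setT kn.
Proof.
apply: measurable_fun_integral_kernel; last exact: mhn.
- by move=> U mU; exact: measurable_kernel.
- exact: hn_ge0.
Qed.

Lemma fine_abs_le (x : \bar R) : 0 <= x -> `|(fine x)%:E| <= `|x|.
Proof. by case: x => [r||]//= _; rewrite leey. Qed.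

Section Int.
Hypothesis Yint : P.-integrable setT (fun w => (Y w)%:E).
Let mu : measure T R := pfm P mW.

Lemma int_hp A (mA : measurable A) :
  \int[P]_(w in W @^-1` A) hp (Y w) = \int[mu]_(t in A) kp t.
Proof.
rewrite disint//; [|exact: hp_ge0|exact: mhp].
rewrite [RHS](ge0_integral_pushforward mW)//.
- exact: measurable_funTS mkp.
- by move=> t _; exact: kp_ge0.
Qed.

Lemma int_hn A (mA : measurable A) :
  \int[P]_(w in W @^-1` A) hn (Y w) = \int[mu]_(t in A) kn t.
Proof.
rewrite disint//; [|exact: hn_ge0|exact: mhn].
rewrite [RHS](ge0_integral_pushforward mW)//.
- exact: measurable_funTS mkn.
- by move=> t _; exact: kn_ge0.
Qed.

Let absY : \int[P]_(w in setT) `|(Y w)%:E| < +oo.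
Proof. by case/integrableP: Yint. Qed.

Lemma kp_int : mu.-integrable setT kp.
Proof.
apply/integrableP; split; first exact: mkp.
under eq_integral do rewrite gee0_abs ?kp_ge0//.
rewrite -int_hp// preimage_setT.
apply: le_lt_trans absY; apply: ge0_le_integral => //.
- by move=> w _; exact: hp_ge0.
- by apply: measurableT_comp; [exact: mhp|exact: mY].
- by apply: measurableT_comp => //; apply/measurable_EFinP.
- move=> w _; rewrite /hp -EFin_max lee_fin /=.
  by rewrite ge_max ler_norm normr_ge0.
Qed.

Lemma kn_int : mu.-integrable setT kn.
Proof.
apply/integrableP; split; first exact: mkn.
under eq_integral do rewrite gee0_abs ?kn_ge0//.
rewrite -int_hn// preimage_setT.
apply: le_lt_trans absY; apply: ge0_le_integral => //.
- by move=> w _; exact: hn_ge0.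
- by apply: measurableT_comp; [exact: mhn|exact: mY].
- by apply: measurableT_comp => //; apply/measurable_EFinP.
- move=> w _; rewrite /hn -EFin_max lee_fin /=.
  by rewrite ge_max normr_ge0 andbT -normrN ler_norm.
Qed.

Definition kbar t : R := fine (kp t) - fine (kn t).

Lemma mkbar : measurable_fun setT kbar.
Proof.
apply: measurable_funB.
- by apply: measurableT_comp; [exact: fine_measurable|exact: mkp].
- by apply: measurableT_comp; [exact: fine_measurable|exact: mkn].
Qed.

Lemma fkp_int : mu.-integrable setT (EFin \o (fine \o kp)).
Proof.
apply: le_integrable kp_int => //.
- apply/measurable_EFinP; apply: measurableT_comp; [exact: fine_measurable|exact: mkp].
- by move=> t _; apply: fine_abs_le; exact: kp_ge0.
Qed.

Lemma fkn_int : mu.-integrable setT (EFin \o (fine \o kn)).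
Proof.
apply: le_integrable kn_int => //.
- apply/measurable_EFinP; apply: measurableT_comp; [exact: fine_measurable|exact: mkn].
- by move=> t _; apply: fine_abs_le; exact: kn_ge0.
Qed.

Lemma kbar_int : mu.-integrable setT (EFin \o kbar).
Proof.
rewrite (_ : EFin \o kbar = (fun t => (fine (kp t))%:E - (fine (kn t))%:E)); last first.
  by apply/funext => t.
by apply: integrableB => //; [exact: fkp_int|exact: fkn_int].
Qed.

Lemma kp_ae : ae_eq mu setT kp (EFin \o (fine \o kp)).
Proof.
apply: filterS (integrable_ae measurableT kp_int) => t H /H.
by move=> /fineK.
Qed.

Lemma kn_ae : ae_eq mu setT kn (EFin \o (fine \o kn)).
Proof.
apply: filterS (integrable_ae measurableT kn_int) => t H /H.
by move=> /fineK.
Qed.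

Lemma int_Y A (mA : measurable A) :
  \int[P]_(w in W @^-1` A) (Y w)%:E = \int[mu]_(t in A) (kbar t)%:E.
Proof.
rewrite [LHS]integralE.
rewrite (_ : (fun w => (Y w)%:E)^\+ = fun w => hp (Y w)); last first.
  by apply/funext => w; rewrite funeposE.
rewrite (_ : (fun w => (Y w)%:E)^\- = fun w => hn (Y w)); last first.
  by apply/funext => w; rewrite funenegE.
rewrite int_hp// int_hn//.
rewrite /kbar; under [RHS]eq_integral do rewrite EFinB.
rewrite integralB_EFin//; last 2 first.
- exact: integrableS fkp_int.
- exact: integrableS fkn_int.
congr (_ - _); apply: ae_eq_integral => //.
- exact: measurable_funTS mkp.
- apply/measurable_EFinP; apply: measurable_funTS.
  apply: measurableT_comp; [exact: fine_measurable|exact: mkp].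
- exact: ae_eq_subset kp_ae.
- exact: measurable_funTS mkn.
- apply/measurable_EFinP; apply: measurable_funTS.
  apply: measurableT_comp; [exact: fine_measurable|exact: mkn].
- exact: ae_eq_subset kn_ae.
Qed.

Lemma cexp_ae (g : T -> R) : is_cexp P Y W g ->
  ae_eq mu setT (EFin \o kbar) (EFin \o g).
Proof.
move=> [mg [gi gE]].
apply: integral_ae_eq => //; first exact: kbar_int.
  by apply/measurable_EFinP.
move=> E _ mE.
rewrite -int_Y// gE// integral_pushforward//.
- by apply/measurable_EFinP.
- by apply: integrableS gi => //; apply: mpre.
Qed.

End Int.

End Gen.
Arguments cexp_ae {R d O P dT T W Y} mW mY {K} HK Yint {g}.
Arguments int_Y {R d O P dT T W Y} mW mY {K} HK Yint {A}.
Arguments kbar_int {R d O P dT T W Y} mW mY {K} HK Yint.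

Section Model.
Context (R : realType) (m k : nat).
Local Open Scope ereal_scope.

Lemma mhead n : measurable_fun setT (fun t : n.-tuple R => head 0%R (tval t)).
Proof.
case: n => [|n].
  rewrite (_ : (fun t => _) = fun _ => 0%R); first exact: measurable_cst.
  by apply/funext => t; rewrite (tuple0 t).
rewrite (_ : (fun t => _) = (fun t : n.+1.-tuple R => tnth t ord0)).
  exact: measurable_tnth.
by apply/funext => t; rewrite (tnth_nth 0%R) nth0.
Qed.

Lemma mXv (M : SCM R m) d th : measurable_fun setT (Xv M d th).
Proof. exact: sol_meas. Qed.

Lemma mYv (M : SCM R m) d th : measurable_fun setT (Yv M d th).
Proof.
rewrite /Yv (_ : (fun w => _) = (fun t : Val R m => head 0%R (tval t)) \o (fun w => sol M d th w (vY M)))//.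
apply: measurableT_comp; [exact: mhead|exact: sol_meas].
Qed.

Lemma mZv (M : SCM R m) (zn : 'I_k -> Vn M) d th : measurable_fun setT (Zv M zn d th).
Proof.
apply/measurable_fun_tnthP => i.
rewrite (_ : _ \o _ = fun w => sol M d th w (zn i)); first exact: sol_meas.
by apply/funext => w /=; rewrite tnth_mktuple.
Qed.

Lemma mXZv (M : SCM R m) (zn : 'I_k -> Vn M) d th : measurable_fun setT (XZv M zn d th).
Proof. apply: measurable_fun_pair; [exact: mXv|exact: mZv]. Qed.

Lemma mXZYv (M : SCM R m) (zn : 'I_k -> Vn M) d th : measurable_fun setT (XZYv M zn d th).
Proof. apply: measurable_fun_pair; [exact: mXZv|exact: mYv]. Qed.

Lemma AC_null (M : SCM R m) (zn : 'I_k -> Vn M) : Defs.AC M zn ->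
  forall d th d' th' N, measurable N ->
  Pr M (XZv M zn d th @^-1` N) = 0 -> Pr M (XZv M zn d' th' @^-1` N) = 0.
Proof.
move=> ac d th d' th' N mN N0.
have : (law M _ _ (XZv M zn d th)).-null_set N.
  move=> A mA AN; apply/eqP; rewrite eq_le measure_ge0 andbT -N0.
  apply: le_measure; rewrite ?inE.
  - by move: (mXZv M zn d th measurableT _ mA); rewrite setTI.
  - by move: (mXZv M zn d th measurableT _ mN); rewrite setTI.
  - by move=> w /AN.
move/(ac d' d th' th) => H.
exact: (H N mN).
Qed.

Lemma A_gen (M : SCM R m) (zn : 'I_k -> Vn M) : inSub M zn ->
  forall d th d' th' (g : Val R m * k.-tuple (Val R m) -> R),
  is_cexp (Pr M) (Yv M d th) (XZv M zn d th) g ->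
  forall A, measurable A ->
  \int[Pr M]_(w in XZv M zn d' th' @^-1` A) (Yv M d' th' w)%:E =
  \int[Pr M]_(w in XZv M zn d' th' @^-1` A) (g (XZv M zn d' th' w))%:E.
Proof.
move=> [_ [K HK] ac Yi] d th d' th' g cg A mA.
have mW := mXZv M zn d th; have mW' := mXZv M zn d' th'.
have mY := mYv M d th; have mY' := mYv M d' th'.
have ae1 := cexp_ae mW mY (HK d th) (Yi d th) cg.
have ae2 : ae_eq (pfm (Pr M) mW') setT (EFin \o kbar _ _ _ K) (EFin \o g).
  by apply: ae_transfer ae1; exact: AC_null.
rewrite (int_Y mW' mY' (HK d' th') (Yi d' th') mA).
have mg : measurable_fun setT (EFin \o g) by apply/measurable_EFinP; case: cg.
have gi : (pfm (Pr M) mW').-integrable setT (EFin \o g).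
  apply: integrable_aeq ae2 => //.
  exact: (kbar_int mW' mY' (HK d' th') (Yi d' th')).
rewrite (ae_eq_integral (EFin \o g))//.
- rewrite integral_pushforward//.
  apply: integrableS (integrable_pull gi) => //.
  by move: (mW' measurableT _ mA); rewrite setTI.
- by apply/measurable_funTS/measurable_EFinP; exact: mkbar.
- exact: measurable_funTS.
- exact: ae_eq_subset ae2.
Qed.

Lemma preXZY (M : SCM R m) (zn : 'I_k -> Vn M) d th (A : set (Val R m * k.-tuple (Val R m))) :
  XZYv M zn d th @^-1` (A `*` setT) = XZv M zn d th @^-1` A.
Proof.
apply/seteqP; split => w /=; rewrite /XZYv /preimage /setX /=.
  by case.
by [].
Qed.

Lemma int_joint (M : SCM R m) (zn : 'I_k -> Vn M) : Y_integrable M ->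
  forall d th (A : set (Val R m * k.-tuple (Val R m))), measurable A ->
  \int[Pr M]_(w in XZv M zn d th @^-1` A) (Yv M d th w)%:E =
  \int[pfm (Pr M) (mXZYv M zn d th)]_(p in A `*` setT) (p.2)%:E.
Proof.
move=> Yi d th A mA.
have mXZY := mXZYv M zn d th.
have mAT : measurable (A `*` [set: R]) by exact: measurableX.
have ms : measurable_fun setT (fun p : (Val R m * k.-tuple (Val R m)) * R => (p.2)%:E).
  exact: (measurableT_comp (@EFin_measurable R _) measurable_snd).
have iY : (Pr M).-integrable (XZYv M zn d th @^-1` (A `*` [set: R]))
    ((fun p : (Val R m * k.-tuple (Val R m)) * R => (p.2)%:E) \o XZYv M zn d th).
  rewrite preXZY; apply: integrableS (Yi d th) => //.
  by move: (mXZv M zn d th measurableT _ mA); rewrite setTI.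
rewrite (integral_pushforward mXZY ms iY mAT).
by rewrite preXZY.
Qed.

Lemma same_int (M1 : SCM R m) (zn1 : 'I_k -> Vn M1) (M2 : SCM R m) (zn2 : 'I_k -> Vn M2) :
  Y_integrable M1 -> Y_integrable M2 -> forall d th,
  same_law M1 M2 (XZYv M1 zn1 d th) (XZYv M2 zn2 d th) ->
  forall A, measurable A ->
  \int[Pr M1]_(w in XZv M1 zn1 d th @^-1` A) (Yv M1 d th w)%:E =
  \int[Pr M2]_(w in XZv M2 zn2 d th @^-1` A) (Yv M2 d th w)%:E.
Proof.
move=> Y1 Y2 d th sl A mA.
rewrite (@int_joint M1 zn1 Y1 d th A mA) (@int_joint M2 zn2 Y2 d th A mA).
apply: eq_measure_integral => B mB _.
by rewrite !pfmE; exact: (sl B mB).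
Qed.

Lemma same_XZ (M1 : SCM R m) (zn1 : 'I_k -> Vn M1) (M2 : SCM R m) (zn2 : 'I_k -> Vn M2) d th :
  same_law M1 M2 (XZYv M1 zn1 d th) (XZYv M2 zn2 d th) ->
  same_law M1 M2 (XZv M1 zn1 d th) (XZv M2 zn2 d th).
Proof.
move=> sl A mA; rewrite /law -!preXZY.
by apply: sl; exact: measurableX.
Qed.

Lemma B_gen (M1 : SCM R m) (zn1 : 'I_k -> Vn M1) (M2 : SCM R m) (zn2 : 'I_k -> Vn M2) :
  inSub M1 zn1 -> inSub M2 zn2 -> forall d th d' th',
  same_law M1 M2 (XZYv M1 zn1 d th) (XZYv M2 zn2 d th) ->
  same_law M1 M2 (XZv M1 zn1 d' th') (XZv M2 zn2 d' th') ->
  forall A, measurable A ->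
  \int[Pr M1]_(w in XZv M1 zn1 d' th' @^-1` A) (Yv M1 d' th' w)%:E =
  \int[Pr M2]_(w in XZv M2 zn2 d' th' @^-1` A) (Yv M2 d' th' w)%:E.
Proof.
move=> [_ [K1 HK1] ac1 Yi1] [_ [K2 HK2] ac2 Yi2] d th d' th' slr slr' A mA.
have mW1 := mXZv M1 zn1 d th; have mW1' := mXZv M1 zn1 d' th'.
have mY1 := mYv M1 d th; have mY1' := mYv M1 d' th'.
have mW2 := mXZv M2 zn2 d th; have mW2' := mXZv M2 zn2 d' th'.
have mY2 := mYv M2 d th; have mY2' := mYv M2 d' th'.
have ae1 : ae_eq (pfm (Pr M1) mW1) setT (EFin \o kbar _ _ _ K1) (EFin \o kbar _ _ _ K2).
  apply: integral_ae_eq => //.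
  - exact: (kbar_int mW1 mY1 (HK1 d th) (Yi1 d th)).
  - by apply/measurable_EFinP; exact: mkbar.
  move=> E _ mE.
  rewrite -(int_Y mW1 mY1 (HK1 d th) (Yi1 d th) mE).
  rewrite (@same_int M1 zn1 M2 zn2 Yi1 Yi2 d th slr E mE).
  rewrite (int_Y mW2 mY2 (HK2 d th) (Yi2 d th) mE).
  apply: eq_measure_integral => B mB _.
  by rewrite !pfmE; symmetry; exact: (@same_XZ M1 zn1 M2 zn2 d th slr B mB).
have ae2 : ae_eq (pfm (Pr M1) mW1') setT (EFin \o kbar _ _ _ K1) (EFin \o kbar _ _ _ K2).
  by apply: ae_transfer ae1; exact: AC_null.
rewrite (int_Y mW1' mY1' (HK1 d' th') (Yi1 d' th') mA).
rewrite (int_Y mW2' mY2' (HK2 d' th') (Yi2 d' th') mA).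
rewrite (ae_eq_integral (EFin \o kbar _ _ _ K2))//.
- apply: eq_measure_integral => B mB _.
  by rewrite !pfmE; exact: (slr' B mB).
- by apply/measurable_funTS/measurable_EFinP; exact: mkbar.
- by apply/measurable_funTS/measurable_EFinP; exact: mkbar.
- exact: ae_eq_subset ae2.
Qed.

Lemma preX (M : SCM R m) (zn : 'I_k -> Vn M) d th (E : set (Val R m)) :
  XZv M zn d th @^-1` (E `*` setT) = Xv M d th @^-1` E.
Proof.
apply/seteqP; split => w /=; rewrite /XZv /preimage /setX /=.
  by case.
by [].
Qed.

End Model.

End Aux.

(* do(D = 0) is realised as do(D = 0, Theta = th0) for an arbitrary th0;
   d = false encodes D = 0, d = true encodes D = 1. *)
Theorem corollary1 (R : realType) (m k : nat) :
  (* (T1), first identification formula *)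
  ((forall (M : SCM R m) (zn : 'I_k -> Vn M), inSub M zn ->
     forall (th th0 : Val R m) (g : Val R m * k.-tuple (Val R m) -> R),
     is_cexp (Pr M) (Yv M false th0) (XZv M zn false th0) g ->
     tau M th th0 =
       (\int[Pr M]_w (g (XZv M zn true th w))%:E - EY M false th0)%E)
   /\
   (forall (M1 : SCM R m) (zn1 : 'I_k -> Vn M1)
           (M2 : SCM R m) (zn2 : 'I_k -> Vn M2),
     inSub M1 zn1 -> inSub M2 zn2 -> forall th th0 : Val R m,
     same_law M1 M2 (XZYv M1 zn1 false th0) (XZYv M2 zn2 false th0) ->
     same_law M1 M2 (XZv M1 zn1 true th) (XZv M2 zn2 true th) ->
     tau M1 th th0 = tau M2 th th0)) /\
  (* (T1), second identification formula *)
  ((forall (M : SCM R m) (zn : 'I_k -> Vn M), inSub M zn ->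
     forall (th th0 : Val R m) (g : Val R m * k.-tuple (Val R m) -> R),
     is_cexp (Pr M) (Yv M true th) (XZv M zn true th) g ->
     tau M th th0 =
       (EY M true th - \int[Pr M]_w (g (XZv M zn false th0 w))%:E)%E)
   /\
   (forall (M1 : SCM R m) (zn1 : 'I_k -> Vn M1)
           (M2 : SCM R m) (zn2 : 'I_k -> Vn M2),
     inSub M1 zn1 -> inSub M2 zn2 -> forall th th0 : Val R m,
     same_law M1 M2 (XZYv M1 zn1 true th) (XZYv M2 zn2 true th) ->
     same_law M1 M2 (XZv M1 zn1 false th0) (XZv M2 zn2 false th0) ->
     tau M1 th th0 = tau M2 th th0)) /\
  (* (T2) retraining effect rho(th1, th0) with th1 = theta_{t+1}, th0 = theta_t *)
  ((forall (M : SCM R m) (zn : 'I_k -> Vn M), inSub M zn ->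
     forall (th1 th0 : Val R m) (g : Val R m * k.-tuple (Val R m) -> R),
     is_cexp (Pr M) (Yv M true th0) (XZv M zn true th0) g ->
     rho M th1 th0 =
       (\int[Pr M]_w (g (XZv M zn true th1 w))%:E - EY M true th0)%E)
   /\
   (forall (M1 : SCM R m) (zn1 : 'I_k -> Vn M1)
           (M2 : SCM R m) (zn2 : 'I_k -> Vn M2),
     inSub M1 zn1 -> inSub M2 zn2 -> forall th1 th0 : Val R m,
     same_law M1 M2 (XZYv M1 zn1 true th0) (XZYv M2 zn2 true th0) ->
     same_law M1 M2 (XZv M1 zn1 true th1) (XZv M2 zn2 true th1) ->
     rho M1 th1 th0 = rho M2 th1 th0)) /\
  (* (T3) baseline predictor E[Y | X, do(D = 0)] *)
  ((forall (M : SCM R m) (zn : 'I_k -> Vn M), inSub M zn ->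
     forall (th th0 : Val R m) (g : Val R m * k.-tuple (Val R m) -> R)
            (h b : Val R m -> R),
     (* g = E[Y | X, Z, do(D = 1, Theta = th)] *)
     is_cexp (Pr M) (Yv M true th) (XZv M zn true th) g ->
     (* h = E[ g(X, Z) | X, do(D = 0) ] *)
     is_cexp (Pr M) (fun w => g (XZv M zn false th0 w)) (Xv M false th0) h ->
     (* b = E[Y | X, do(D = 0)]  (the baseline predictor) *)
     is_cexp (Pr M) (Yv M false th0) (Xv M false th0) b ->
     {ae Pr M, forall w, b (Xv M false th0 w) = h (Xv M false th0 w)})
   /\
   (forall (M1 : SCM R m) (zn1 : 'I_k -> Vn M1)
           (M2 : SCM R m) (zn2 : 'I_k -> Vn M2),
     inSub M1 zn1 -> inSub M2 zn2 -> forall (th th0 : Val R m)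
     (b1 b2 : Val R m -> R),
     same_law M1 M2 (XZYv M1 zn1 true th) (XZYv M2 zn2 true th) ->
     same_law M1 M2 (XZv M1 zn1 false th0) (XZv M2 zn2 false th0) ->
     is_cexp (Pr M1) (Yv M1 false th0) (Xv M1 false th0) b1 ->
     is_cexp (Pr M2) (Yv M2 false th0) (Xv M2 false th0) b2 ->
     {ae Pr M1, forall w, b1 (Xv M1 false th0 w) = b2 (Xv M1 false th0 w)})).
Proof.
split; [split|split; [split|split; [split|split]]].
- move=> M zn H th th0 g cg; rewrite /tau; congr (_ - _)%E.
  have := @Aux.A_gen R m k M zn H false th0 true th g cg setT measurableT.
  by rewrite !preimage_setT.
- move=> M1 zn1 M2 zn2 H1 H2 th th0 s0 s1; rewrite /tau /EY; congr (_ - _)%E.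
  + have := @Aux.B_gen R m k M1 zn1 M2 zn2 H1 H2 false th0 true th s0 s1 setT measurableT.
    by rewrite !preimage_setT.
  + case: H1 => _ _ _ Y1; case: H2 => _ _ _ Y2.
    have := @Aux.same_int R m k M1 zn1 M2 zn2 Y1 Y2 false th0 s0 setT measurableT.
    by rewrite !preimage_setT.
- move=> M zn H th th0 g cg; rewrite /tau; congr (_ - _)%E.
  have := @Aux.A_gen R m k M zn H true th false th0 g cg setT measurableT.
  by rewrite !preimage_setT.
- move=> M1 zn1 M2 zn2 H1 H2 th th0 s1 s0; rewrite /tau /EY; congr (_ - _)%E.
  + case: H1 => _ _ _ Y1; case: H2 => _ _ _ Y2.
    have := @Aux.same_int R m k M1 zn1 M2 zn2 Y1 Y2 true th s1 setT measurableT.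
    by rewrite !preimage_setT.
  + have := @Aux.B_gen R m k M1 zn1 M2 zn2 H1 H2 true th false th0 s1 s0 setT measurableT.
    by rewrite !preimage_setT.
- move=> M zn H th1 th0 g cg; rewrite /rho; congr (_ - _)%E.
  have := @Aux.A_gen R m k M zn H true th0 true th1 g cg setT measurableT.
  by rewrite !preimage_setT.
- move=> M1 zn1 M2 zn2 H1 H2 th1 th0 s0 s1; rewrite /rho /EY; congr (_ - _)%E.
  + have := @Aux.B_gen R m k M1 zn1 M2 zn2 H1 H2 true th0 true th1 s0 s1 setT measurableT.
    by rewrite !preimage_setT.
  + case: H1 => _ _ _ Y1; case: H2 => _ _ _ Y2.
    have := @Aux.same_int R m k M1 zn1 M2 zn2 Y1 Y2 true th0 s0 setT measurableT.
    by rewrite !preimage_setT.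
- move=> M zn H th th0 g h b cg ch cb.
  have mX := @Aux.mXv R m M false th0.
  apply: (Aux.ae_pull (mW := mX)).
  have [mb [bi bE]] := cb; have [mh [hi hE]] := ch.
  have mpX E : measurable E -> measurable (Xv M false th0 @^-1` E).
    by move=> mE; move: (mX measurableT _ mE); rewrite setTI.
  apply: integral_ae_eq => //.
  + apply: (Aux.integrable_push mX) => //; exact/measurable_realfun.measurable_EFinP.
  + exact/measurable_realfun.measurable_EFinP.
  move=> E _ mE.
  rewrite integral_pushforward//; last 2 first.
    - exact/measurable_realfun.measurable_EFinP.
    - by apply: integrableS bi => //; exact: mpX.
  rewrite [RHS]integral_pushforward//; last 2 first.
    - exact/measurable_realfun.measurable_EFinP.
    - by apply: integrableS hi => //; exact: mpX.
  rewrite -bE// -hE// -!(@Aux.preX R m k M zn false th0).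
  apply: (@Aux.A_gen R m k M zn H true th false th0 g cg).
  exact: measurableX.
- move=> M1 zn1 M2 zn2 H1 H2 th th0 b1 b2 s1 s0 cb1 cb2.
  have mX1 := @Aux.mXv R m M1 false th0; have mX2 := @Aux.mXv R m M2 false th0.
  apply: (Aux.ae_pull (mW := mX1)).
  have [mb1 [bi1 bE1]] := cb1; have [mb2 [bi2 bE2]] := cb2.
  apply: integral_ae_eq => //.
  + apply: (Aux.integrable_push mX1) => //; exact/measurable_realfun.measurable_EFinP.
  + exact/measurable_realfun.measurable_EFinP.
  move=> E _ mE.
  have mET : measurable (E `*` [set: k.-tuple (Val R m)]) by exact: measurableX.
  transitivity (\int[Aux.pfm (Pr M2) mX2]_(x in E) (EFin \o b2) x)%E; last first.
    apply: eq_measure_integral => B mB _.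
    rewrite !Aux.pfmE -(@Aux.preX R m k M1 zn1 false th0) -(@Aux.preX R m k M2 zn2 false th0).
    by symmetry; apply: s0; exact: measurableX.
  rewrite integral_pushforward//; last 2 first.
    - exact/measurable_realfun.measurable_EFinP.
    - apply: integrableS bi1 => //; move: (mX1 measurableT _ mE); by rewrite setTI.
  rewrite [RHS]integral_pushforward//; last 2 first.
    - exact/measurable_realfun.measurable_EFinP.
    - apply: integrableS bi2 => //; move: (mX2 measurableT _ mE); by rewrite setTI.
  rewrite -bE1// -bE2// -(@Aux.preX R m k M1 zn1 false th0) -(@Aux.preX R m k M2 zn2 false th0).
  exact: (@Aux.B_gen R m k M1 zn1 M2 zn2 H1 H2 true th false th0 s1 s0 _ mET).
Qed.
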